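(* Let $N\ge 2$ and let $y_i,r_i$ ($1\le i\le N$) be real constants with $0\le|r_1|\le|r_2|\le\dots\le|r_{N-1}|\le r_N$. For integers $j$ let $\bm{x}_j=(|y_1+jr_1|,\dots,|y_N+jr_N|)^T\in\mathbb{R}^N$ and $\tilde{\bm{x}}_j=(|y_1+jr_1|,\dots,|y_{N-1}+jr_{N-1}|)^T\in\mathbb{R}^{N-1}$. Then for all integers $j_1<j_2<\dots<j_N$, \[ \max[\bm{x}_{j_1}\ \bm{x}_{j_2}\ \dots\ \bm{x}_{j_N}]=\max\Bigl(y_N+j_Nr_N+\max[\tilde{\bm{x}}_{j_1}\ \dots\ \tilde{\bm{x}}_{j_{N-1}}],\ -y_N-j_1r_N+\max[\tilde{\bm{x}}_{j_2}\ \dots\ \tilde{\bm{x}}_{j_N}]\Bigr). \]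
   Context: Ultradiscrete permanent (UP): for a real $n\times n$ matrix $A=(a_{ij})$, $\max A\equiv\max_{\pi}\sum_{i=1}^n a_{i\pi(i)}$ over all permutations $\pi$ of $\{1,\dots,n\}$; $\max[\bm{b}_1\ \dots\ \bm{b}_n]$ denotes the UP of the matrix with columns $\bm{b}_1,\dots,\bm{b}_n$. *)

(* Defs.v *)
From HB Require Import structures.
From mathcomp Require Import all_boot all_order all_fingroup all_algebra.
Set Implicit Arguments. Unset Strict Implicit. Unset Printing Implicit Defensive.
Import Order.TTheory GRing.Theory Num.Theory.
Local Open Scope ring_scope.

(* The seed of the fold is the identity-permutation term, which is harmless
   since max is idempotent and the identity is among the permutations. *)
Definition upm (R : realDomainType) (n : nat) (A : 'M[R]_n) : R :=
  \big[Num.max/ (\sum_(i < n) A i i)]_(s : {perm 'I_n}) \sum_(i < n) A i (s i).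

Definition xvec (R : realDomainType) (m : nat) (y r : 'I_m -> R) (j : int)
  : 'I_m -> R := fun i => `|y i + j%:~R * r i|.

(* Main.v *)
Require Import Defs.
From HB Require Import structures.
From mathcomp Require Import all_boot all_order all_fingroup all_algebra.
From mathcomp Require Import ring lra.
Import Order.TTheory GRing.Theory Num.Theory.
Local Open Scope ring_scope.

Lemma upm_ge {R : realDomainType} {n} (A : 'M[R]_n) (s : 'S_n) :
  \sum_i A i (s i) <= upm A.
Proof. by rewrite /upm (bigD1 s) //= le_max lexx. Qed.

Lemma upm_ex {R : realDomainType} {n} (A : 'M[R]_n) :
  exists s : 'S_n, upm A = \sum_i A i (s i).
Proof.
rewrite /upm; apply: (big_ind (fun x => exists s : 'S_n, x = \sum_i A i (s i))).
- by exists 1%g; apply: eq_bigr => i _; rewrite perm1.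
- move=> x z [s ->] [t ->].
  case: (lerP (\sum_i A i (s i)) (\sum_i A i (t i))) => h.
  + by exists t.
  + by exists s.
- by move=> s _; exists s.
Qed.

Lemma perm_unlift {n} (s : 'S_n.+1) i : exists q : 'S_n, s = lift_perm i (s i) q.
Proof.
pose ulsf i (s : 'S_n.+1) k := odflt k (unlift (s i) (s (lift i k))).
have ulsfK i' (s' : 'S_n.+1) k: lift (s' i') (ulsf i' s' k) = s' (lift i' k).
  rewrite /ulsf; have:= neq_lift i' k.
  by rewrite -(can_eq (permK s')) => /unlift_some[] ? ? ->.
have inj_ulsf: injective (ulsf i s).
  apply: can_inj (ulsf (s i) s^-1%g) _ => k'.
  by rewrite {1}/ulsf ulsfK !permK liftK.
exists (perm inj_ulsf); apply/permP=> k.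
case: (unliftP i k) => [k'|] ->; rewrite ?lift_perm_id //.
by rewrite lift_perm_lift permE ulsfK.
Qed.

Lemma swap_le {R : realDomainType} {m} (F : 'I_m.+1 -> 'I_m.+1 -> R) (s : 'S_m.+1) c :
 (forall i, i != ord_max -> F i c + F ord_max (s ord_max) <= F i (s ord_max) + F ord_max c) ->
 \sum_i F i (s i) <= \sum_i F i ((s * tperm (s ord_max) c)%g i).
Proof.
move=> H; set k := s ord_max.
have [ekc|nkc] := eqVneq k c.
  by rewrite ekc tperm1 mulg1.
set i0 := (s^-1)%g c.
have si0 : s i0 = c by rewrite /i0 permKV.
have i0N : i0 != ord_max by apply: contraNneq nkc => e; rewrite /k -e si0.
rewrite (bigD1 ord_max) //= [X in _ <= X](bigD1 ord_max) //= (bigD1 i0 i0N) //=.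
rewrite [\sum_(i < m.+1 | i != ord_max) _](bigD1 i0 i0N) //=.
set S := \sum_(i < m.+1 | (i != ord_max) && (i != i0)) F i (s i).
have -> : \sum_(i < m.+1 | (i != ord_max) && (i != i0)) F i ((s * tperm k c)%g i) = S.
  apply: eq_bigr => i /andP[iN ii0]; rewrite permM tpermD //.
  - by rewrite /k (inj_eq perm_inj) eq_sym.
  - by rewrite -si0 (inj_eq perm_inj) eq_sym.
rewrite !permM si0 -/k tpermL tpermR !addrA lerD2r.
by rewrite addrC [F ord_max c + _]addrC; apply: H.
Qed.

Theorem lemma3 (R : realFieldType) (n : nat) (y r : 'I_n.+2 -> R)
  (j : 'I_n.+2 -> int)
  (hr : forall i : 'I_n.+2, (i.+1 < n.+1)%N -> `|r i| <= `|r (inord i.+1)|)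
  (hrN : `|r (inord n)| <= r ord_max)
  (hj : forall i : 'I_n.+2, (i.+1 < n.+2)%N -> j i < j (inord i.+1)) :
  upm (\matrix_(i < n.+2, k < n.+2) xvec y r (j k) i)
  = Num.max
      (y ord_max + (j ord_max)%:~R * r ord_max
        + upm (\matrix_(i < n.+1, k < n.+1)
                 xvec y r (j (widen_ord (leqnSn n.+1) k)) (widen_ord (leqnSn n.+1) i)))
      (- y ord_max - (j ord0)%:~R * r ord_max
        + upm (\matrix_(i < n.+1, k < n.+1)
                 xvec y r (j (lift ord0 k)) (widen_ord (leqnSn n.+1) i))).
Proof.
have jmono : forall a b : 'I_n.+2, (a <= b)%N -> j a <= j b.
  suff H: forall b (a : 'I_n.+2), (a <= b < n.+2)%N -> j a <= j (inord b).
    by move=> a b ab; have := H b a; rewrite ab ltn_ord inord_val; apply.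
  elim=> [|b IH] a /andP[ab bn].
    have -> : a = inord 0 by apply/val_inj; rewrite /= inordK //; move: ab; rewrite leqn0 => /eqP.
    by [].
  rewrite leq_eqVlt in ab; case/orP: ab => [/eqP ab | ab].
    by rewrite -ab inord_val.
  apply: le_trans (IH a _) _; first by apply/andP; split => //; exact: ltnW.
  have := hj (inord b); rewrite inordK ?(ltnW bn) //; move/(_ bn) => /ltW; apply.
have rmono : forall i : 'I_n.+2, `|r i| <= r ord_max.
  suff H: forall b (a : 'I_n.+2), (a <= b <= n)%N -> `|r a| <= `|r (inord b)|.
    move=> i; have rN0 : 0 <= r ord_max by apply: le_trans hrN.
    case: (ltnP i n.+1) => hi.
      by apply: le_trans hrN; apply: H; rewrite leqnn andbT.
    have -> : i = ord_max by apply/val_inj/eqP; rewrite /= eqn_leq hi -ltnS ltn_ord.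
    by rewrite ger0_norm.
  elim=> [|b IH] a /andP[ab bn].
    have -> : a = inord 0 by apply/val_inj; rewrite /= inordK //; move: ab; rewrite leqn0 => /eqP.
    by [].
  rewrite leq_eqVlt in ab; case/orP: ab => [/eqP ab | ab].
    by rewrite -ab inord_val.
  apply: le_trans (IH a _) _; first by apply/andP; split => //; exact: ltnW.
  have := hr (inord b); rewrite inordK; last by apply: leq_trans bn _; rewrite ltnW // ltnW.
  by apply.
have lip : forall i (a b : int), `|y i + a%:~R * r i| - `|y i + b%:~R * r i|
    <= `|a%:~R - b%:~R| * r ord_max.
  move=> i a b; apply: le_trans (ler_norm _) _; apply: le_trans (ler_dist_dist _ _) _.
  have -> : y i + a%:~R * r i - (y i + b%:~R * r i) = (a%:~R - b%:~R) * r i by ring.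
  by rewrite normrM ler_wpM2l.
have ew : forall i : 'I_n.+1, widen_ord (leqnSn n.+1) i = lift ord_max i.
  by move=> i; apply/val_inj; rewrite /= /bump leqNgt ltn_ord.
set A := \matrix_(i < n.+2, k < n.+2) xvec y r (j k) i.
have eA : forall i k', A i k' = `|y i + (j k')%:~R * r i| by move=> ? ?; rewrite mxE.
have jk0 : forall k : 'I_n.+2, (j ord0)%:~R <= (j k)%:~R :> R.
  by move=> k; rewrite ler_int jmono.
have jkN : forall k : 'I_n.+2, (j k)%:~R <= (j ord_max)%:~R :> R.
  by move=> k; rewrite ler_int jmono // -ltnS ltn_ord.
apply/eqP; rewrite eq_le; apply/andP; split.
- have [s ->] := upm_ex A; set k := s ord_max.
  case: (lerP 0 (y ord_max + (j k)%:~R * r ord_max)) => hk.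
  + pose F i k' := if i == ord_max then y ord_max + (j k')%:~R * r ord_max else A i k'.
    have e1 : \sum_i A i (s i) = \sum_i F i (s i).
      by apply: eq_bigr => i _; rewrite /F; case: eqP => // ->; rewrite eA ger0_norm.
    rewrite e1; apply: le_trans (swap_le F s ord_max _) _.
      move=> i iN; rewrite /F (negbTE iN) eqxx !eA.
      have hd : `|(j ord_max)%:~R - (j k)%:~R| = (j ord_max)%:~R - (j k)%:~R :> R.
        by rewrite ger0_norm // subr_ge0.
      have := lip i (j ord_max) (j k); rewrite hd mulrBl.
      lra.
    set s' := (s * tperm k ord_max)%g.
    have s'N : s' ord_max = ord_max by rewrite permM tpermL.
    have [q eq] := perm_unlift s' ord_max; rewrite s'N in eq.
    rewrite big_ord_recr /= s'N /F eqxx le_max; apply/orP; left.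
    rewrite addrC lerD2l; apply: le_trans (upm_ge _ q); rewrite le_eqVlt; apply/orP; left.
    apply/eqP; apply: eq_bigr => i _; rewrite !mxE !ew eq lift_perm_lift.
    by rewrite eq_sym (negbTE (neq_lift _ _)).
  + pose F i k' := if i == ord_max then - y ord_max - (j k')%:~R * r ord_max else A i k'.
    have e1 : \sum_i A i (s i) = \sum_i F i (s i).
      by apply: eq_bigr => i _; rewrite /F; case: eqP => // ->; rewrite eA ltr0_norm // opprD.
    rewrite e1; apply: le_trans (swap_le F s ord0 _) _.
      move=> i iN; rewrite /F (negbTE iN) eqxx !eA.
      have hd : `|(j ord0)%:~R - (j k)%:~R| = (j k)%:~R - (j ord0)%:~R :> R.
        by rewrite distrC ger0_norm // subr_ge0.
      have := lip i (j ord0) (j k); rewrite hd mulrBl.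
      lra.
    set s' := (s * tperm k ord0)%g.
    have s'N : s' ord_max = ord0 by rewrite permM tpermL.
    have [q eq] := perm_unlift s' ord_max; rewrite s'N in eq.
    rewrite big_ord_recr /= s'N /F eqxx le_max; apply/orP; right.
    rewrite addrC lerD2l; apply: le_trans (upm_ge _ q); rewrite le_eqVlt; apply/orP; left.
    apply/eqP; apply: eq_bigr => i _; rewrite !mxE !ew eq lift_perm_lift.
    by rewrite eq_sym (negbTE (neq_lift _ _)).
- rewrite ge_max; apply/andP; split.
  + have [q ->] := upm_ex (\matrix_(i < n.+1, k < n.+1)
       xvec y r (j (widen_ord (leqnSn n.+1) k)) (widen_ord (leqnSn n.+1) i)).
    apply: le_trans (upm_ge A (lift_perm ord_max ord_max q)).
    rewrite [X in _ <= X]big_ord_recr /= lift_perm_id addrC lerD //; first by rewrite eA ler_norm.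
    rewrite le_eqVlt; apply/orP; left; apply/eqP; apply: eq_bigr => i _.
    by rewrite !mxE !ew lift_perm_lift.
  + have [q ->] := upm_ex (\matrix_(i < n.+1, k < n.+1)
       xvec y r (j (lift ord0 k)) (widen_ord (leqnSn n.+1) i)).
    apply: le_trans (upm_ge A (lift_perm ord_max ord0 q)).
    rewrite [X in _ <= X]big_ord_recr /= lift_perm_id addrC lerD //; first by rewrite eA -normrN opprD ler_norm.
    rewrite le_eqVlt; apply/orP; left; apply/eqP; apply: eq_bigr => i _.
    by rewrite !mxE !ew lift_perm_lift.
Qed.
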